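(* Let $q$ be a prime power, let $r$ be an odd prime not dividing $q$ such that the multiplicative order of $q$ modulo $r$ is $r-1$. Let $n>1$ with $\gcd(n,r-1)=1$, and let $f(x)$ be a monic irreducible polynomial of degree $n$ over $\mathbb{F}_q$ of order $t$. Let $R(x)\in\mathbb{F}_q[x]$ be the remainder of $x^r$ modulo $f(x)$, i.e. $x^r\equiv R(x)\pmod{f(x)}$, and let $\psi(x)=\sum_{u=0}^{n}\psi_u x^u\in\mathbb{F}_q[x]$ be the monic nonzero polynomial of least degree such that $$\sum_{u=0}^{n}\psi_u\,(R(x))^u\equiv 0\pmod{f(x)}.$$ Then $\psi(x)$ is an irreducible polynomial of degree $n$ over $\mathbb{F}_q$, and $$F(x)=\frac{\psi(x^r)}{f(x)}$$ is an irreducible polynomial of degree $(r-1)n$ over $\mathbb{F}_q$ whose order is $rt$.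
   Context: The order of a polynomial $P(x)\in\mathbb{F}_q[x]$ with $P(0)\neq0$ is the least positive integer $e$ such that $P(x)$ divides $x^e-1$; for an irreducible $P$ it equals the multiplicative order of any of its roots. *)

(* Defs.v *)
From HB Require Import structures.
From mathcomp Require Import all_boot all_order all_algebra all_field.
Set Implicit Arguments. Unset Strict Implicit. Unset Printing Implicit Defensive.
Import GRing.Theory.
Local Open Scope ring_scope.

Definition is_mult_order_mod (q r e : nat) : Prop :=
  (0 < e)%N /\ (q ^ e = 1 %[mod r])%N /\
  (forall k : nat, (0 < k)%N -> (q ^ k = 1 %[mod r])%N -> (e <= k)%N).

Definition is_poly_order (F : fieldType) (P : {poly F}) (e : nat) : Prop :=
  (0 < e)%N /\ P %| 'X^e - 1 /\
  (forall k : nat, (0 < k)%N -> P %| 'X^k - 1 -> (e <= k)%N).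

(* Main.v *)
Require Import Defs.
From HB Require Import structures.
From mathcomp Require Import all_boot all_order all_algebra all_field.
From Stdlib Require Import Classical Lia.
Set Implicit Arguments. Unset Strict Implicit. Unset Printing Implicit Defensive.
Import GRing.Theory.
Local Open Scope ring_scope.
Ltac nlia := repeat match goal with H : is_true (_ <= _)%N |- _ => apply (elimT leP) in H
 | H : is_true (_ < _)%N |- _ => apply (elimT ltP) in H end;
 try (apply (introT leP)); unfold addn, subn, muln, addn_rec, subn_rec, muln_rec in *; lia.

Lemma gcd_closed (P : nat -> Prop) :
  (forall m k, (m <= k)%N -> P m -> P k -> P (k - m)%N) ->
  forall m k, P m -> P k -> P (gcdn m k).
Proof.
move=> H m k; have [N] := ubnP (m + k); elim: N m k => // N IH m k.
case: m => [|m]; first by rewrite gcd0n.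
case: k => [|k]; first by rewrite gcdn0.
move=> lt Pm Pk.
case: (leqP m.+1 k.+1) => hmk.
- rewrite -(subnK hmk) gcdnDr; apply: IH => //; last by apply: H.
  nlia.
- rewrite gcdnC -(subnK (ltnW hmk)) gcdnDr; apply: IH => //; last by apply: H => //; apply: ltnW.
  nlia.
Qed.
Lemma ord_dvd (P : nat -> Prop) e :
  (forall m k, (m <= k)%N -> P m -> P k -> P (k - m)%N) ->
  (0 < e)%N -> P e -> (forall k, (0 < k)%N -> P k -> (e <= k)%N) ->
  forall k, P k -> (e %| k)%N.
Proof.
move=> H e0 Pe min k Pk.
have g := gcd_closed H Pe Pk.
have gpos : (0 < gcdn e k)%N by rewrite gcdn_gt0 e0.
have a := min _ gpos g; have b := dvdn_leq e0 (dvdn_gcdl e k).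
by apply/gcdn_idPl; apply/eqP; rewrite eqn_leq a b.
Qed.

Lemma expr_closed (R : ringType) (x : R) :
  forall m k, (m <= k)%N -> x ^+ m = 1 -> x ^+ k = 1 -> x ^+ (k - m) = 1.
Proof. by move=> m k mk Pm Pk; rewrite -(subnK mk) exprD Pm mulr1 in Pk. Qed.

Lemma mod_closed (q r : nat) :
  forall m k, (m <= k)%N -> (q ^ m = 1 %[mod r])%N -> (q ^ k = 1 %[mod r])%N ->
   (q ^ (k - m) = 1 %[mod r])%N.
Proof.
move=> m k mk Pm Pk; rewrite -(subnK mk) expnD -modnMmr Pm modnMmr in Pk.
by rewrite muln1 in Pk.
Qed.

Lemma dvd_sub1 (a r : nat) : (0 < a)%N -> (r %| a - 1)%N -> (a = 1 %[mod r])%N.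
Proof. by move=> a0 H; apply/eqP; rewrite eqn_mod_dvd. Qed.

Lemma sub1_dvd (a r : nat) : (0 < a)%N -> (a = 1 %[mod r])%N -> (r %| a - 1)%N.
Proof. by move=> a0 H; rewrite -eqn_mod_dvd // H. Qed.
Definition RF (F K : finFieldType) (iota : {rmorphism F -> K}) (x : K) (h : {poly F}) :=
  [/\ #|K| = (#|F| ^ (size h).-1)%N,
      forall p, (map_poly iota p).[x] = 0 <-> h %| p
    & forall y : K, exists p, y = (map_poly iota p).[x]].

Lemma RF_exists (F : finFieldType) (h : {poly F}) : h \is monic -> irreducible_poly h ->
  exists (K : finFieldType) (iota : {rmorphism F -> K}) (x : K), RF iota x h.
Proof.
move=> hM hI.
have mi : monic_irreducible_poly h by split.
pose K := {poly %/ h with mi}.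
pose iota : {rmorphism F -> K} := qfpoly_const mi.
have ev p : (map_poly iota p).[qpolyX h : K] = in_qpoly h p.
  by rewrite -[in RHS](comp_polyXr p) in_qpoly_comp_horner.
have mE : mk_monic h = h by rewrite /mk_monic hM; case: hI => -> _.
exists K, iota, (qpolyX h : K); split; first by rewrite card_qfpoly.
  move=> p; rewrite ev.
  split=> [/val_eqP /= | hDp].
    by rewrite -Pdiv.IdomainMonic.modpE mE.
  by apply/val_eqP; rewrite /= -Pdiv.IdomainMonic.modpE mE.
move=> y; exists (y : {poly F}); rewrite ev; apply: val_inj => /=.
by rewrite Pdiv.Ring.rmodp_small //; apply: size_mk_monic.
Qed.

Lemma card_pnat (F : finFieldType) :
  exists p, [/\ prime p, p \in [pchar F] & exists k, #|F| = (p ^ k)%N].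
Proof.
have [p pr pcharFp] := finPcharP F.
exists p; split => //; exists (logn p #|pPrimeCharType pcharFp|).
exact: (card_pprimeChar pcharFp).
Qed.

Lemma frobD (F K : finFieldType) (iota : {rmorphism F -> K}) d (a b : K) :
  (a + b) ^+ (#|F| ^ d) = a ^+ (#|F| ^ d) + b ^+ (#|F| ^ d).
Proof.
have [p [pr pF [k Hk]]] := card_pnat F.
have pK := rmorph_pchar iota pF.
apply: exprDn_pchar; rewrite Hk -expnM pnatX (pnatE _ pr) pK //.
Qed.

Lemma expf_card_iter (F : finFieldType) (c : F) d : c ^+ (#|F| ^ d) = c.
Proof.
elim: d => [|d IH]; first by rewrite expr1.
by rewrite expnSr exprM IH expf_card.
Qed.

Lemma all_fixed (F K : finFieldType) (iota : {rmorphism F -> K}) (x : K) h d :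
  RF iota x h -> x ^+ (#|F| ^ d) = x -> forall y : K, y ^+ (#|F| ^ d) = y.
Proof.
move=> [_ _ Hs] Hx y; have [p ->] := Hs y.
elim/poly_ind: p => [|p c IH].
  have q1 := finNzRing_gt1 F.
  rewrite rmorph0 horner0 expr0n expn_eq0.
  by have -> : (#|F| == 0%N) = false by case: #|F| q1.
rewrite rmorphD rmorphM /= map_polyX map_polyC /= hornerD hornerMX hornerC.
rewrite (frobD iota).
have E : forall u v : K, (u * v) ^+ (#|F| ^ d) = u ^+ (#|F| ^ d) * v ^+ (#|F| ^ d).
  by move=> u v; rewrite exprMn.
by rewrite E IH Hx -rmorphXn /= expf_card_iter.
Qed.
Lemma fix_deg (F K : finFieldType) (iota : {rmorphism F -> K}) (x : K) h d :
  RF iota x h -> (0 < d)%N -> x ^+ (#|F| ^ d) = x -> ((size h).-1 <= d)%N.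
Proof.
move=> RFh d0 Hx; have Hall := all_fixed RFh Hx.
case: RFh => Hc _ _.
have q1 := finNzRing_gt1 F.
have Q1 : (1 < #|F| ^ d)%N.
  by rewrite (leq_trans q1) // -{1}(expn1 #|F|) leq_pexp2l // ltnW.
pose P : {poly K} := 'X^(#|F| ^ d) - 'X.
have sP : size P = (#|F| ^ d).+1.
  by rewrite /P size_addl ?size_polyXn // size_polyN size_polyX ltnS.
have P0 : P != 0 by rewrite -size_poly_eq0 sP.
have rP : all (root P) (enum K).
  by apply/allP => y _; rewrite /root /P !hornerE Hall subrr.
have := max_poly_roots P0 rP (enum_uniq K).
by rewrite sP -cardE Hc ltnS leq_exp2l.
Qed.

Lemma fix_iter (K : ringType) (y : K) Q c : y ^+ Q = y -> y ^+ (Q ^ c) = y.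
Proof.
move=> Hy; elim: c => [|c IH]; first by rewrite expr1.
by rewrite expnSr exprM IH Hy.
Qed.

Lemma fix_dvd (F K : finFieldType) (iota : {rmorphism F -> K}) (x : K) h m :
  RF iota x h -> (0 < m)%N -> x ^+ (#|F| ^ m) = x -> ((size h).-1 %| m)%N.
Proof.
move=> RFh m0 Hx; set n := (size h).-1.
have Hn : x ^+ (#|F| ^ n) = x by case: RFh => Hc _ _; rewrite -Hc expf_card.
have [a _ Ha] := Bezoutl n m0.
have Hg : x ^+ (#|F| ^ gcdn m n) = x.
  have H1 : x ^+ (#|F| ^ (gcdn m n + a * n)) = x.
    by rewrite -(divnK Ha) mulnC expnM fix_iter.
  have Ha' : x ^+ (#|F| ^ (a * n)) = x by rewrite mulnC expnM fix_iter.
  by rewrite expnD mulnC exprM Ha' in H1.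
have g0 : (0 < gcdn m n)%N by rewrite gcdn_gt0 m0.
have := fix_deg RFh g0 Hg; rewrite -/n => ng.
have gn : (gcdn m n <= n)%N.
  have n0 : (0 < n)%N.
    case: RFh => Hc _ _; have := finNzRing_gt1 K; rewrite Hc /n.
    by case: (size h).-1 => //; rewrite expn0.
  by apply: dvdn_leq => //; apply: dvdn_gcdr.
by apply/gcdn_idPr; apply/eqP; rewrite eqn_leq gn ng.
Qed.
Lemma ev_dvd (F K : fieldType) (iota : {rmorphism F -> K}) (P g : {poly F}) (w : K) :
  P %| g -> (map_poly iota P).[w] = 0 -> (map_poly iota g).[w] = 0.
Proof. by move=> /dvdpP [Q ->] H; rewrite rmorphM /= hornerM H mulr0. Qed.

Lemma minpoly_dvd (F K : fieldType) (iota : {rmorphism F -> K}) (P g : {poly F}) (w : K) :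
  irreducible_poly P -> (map_poly iota P).[w] = 0 -> (map_poly iota g).[w] = 0 -> P %| g.
Proof.
move=> PI HP Hg; case: (boolP (P %| g)) => // nd.
have cop : coprimep P g by rewrite irreducible_poly_coprime.
have [[u v] /= Huv] := Bezout_coprimepP _ _ cop.
have /size_poly1P [c c0 Ec] : size (u * P + v * g) == 1%N.
  by rewrite (eqp_size Huv) size_poly1.
have := congr1 (fun e => (map_poly iota e).[w]) Ec => /=.
rewrite rmorphD !rmorphM /= hornerD !hornerM HP Hg !mulr0 addr0 map_polyC hornerC.
by move/eqP; rewrite eq_sym fmorph_eq0 (negbTE c0).
Qed.

Lemma ev_comp (F K : fieldType) (iota : {rmorphism F -> K}) (p g : {poly F}) (w : K) :
  (map_poly iota (p \Po g)).[w] = (map_poly iota p).[(map_poly iota g).[w]].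
Proof. by rewrite map_comp_poly horner_comp. Qed.

Lemma ev_Xn (F K : fieldType) (iota : {rmorphism F -> K}) k (w : K) :
  (map_poly iota 'X^k).[w] = w ^+ k.
Proof. by rewrite map_polyXn hornerXn. Qed.

Lemma ev_Xn1 (F K : fieldType) (iota : {rmorphism F -> K}) k (w : K) :
  (map_poly iota ('X^k - 1)).[w] = w ^+ k - 1.
Proof. by rewrite rmorphB /= rmorph1 map_polyXn !hornerE. Qed.
Lemma q_zero (F : finFieldType) : (#|F|%:R : F) = 0.
Proof.
have [p [pr pF [k Hk]]] := card_pnat F.
have q1 := finNzRing_gt1 F.
case: k Hk => [|k] Hk; first by rewrite Hk in q1.
by rewrite Hk natrX (pcharf0 pF) expr0n.
Qed.

Lemma r_nz (F : finFieldType) r : prime r -> ~~ (r %| #|F|)%N -> (r%:R : F) != 0.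
Proof.
move=> pr nd; have [p [pp pF [k Hk]]] := card_pnat F.
rewrite -(dvdn_pcharf pF) (dvdn_prime2 pp pr); apply/negP => /eqP E.
move: nd; rewrite Hk -E.
have q1 := finNzRing_gt1 F.
case: k Hk => [|k] Hk; first by rewrite Hk in q1.
by rewrite expnS dvdn_mulr.
Qed.

Lemma scale_monic (F : fieldType) (g : {poly F}) : g != 0 ->
  ((lead_coef g)^-1 *: g) \is monic /\ size ((lead_coef g)^-1 *: g) = size g.
Proof.
move=> g0; have l0 : lead_coef g != 0 by rewrite lead_coef_eq0.
split; first by rewrite monicE lead_coefZ mulVf.
by rewrite size_scale // invr_eq0.
Qed.

Lemma irr_factor (F : fieldType) (g : {poly F}) : (1 < size g)%N ->
  exists h, [/\ irreducible_poly h, h \is monic & h %| g].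
Proof.
have [N] := ubnP (size g); elim: N g => // N IH g sN sg.
have g0 : g != 0 by rewrite -size_poly_gt0 ltnW.
have l0 : lead_coef g != 0 by rewrite lead_coef_eq0.
have c0 : (lead_coef g)^-1 != 0 by rewrite invr_eq0.
case: (classic (irreducible_poly g)) => [gI | gNI].
  exists ((lead_coef g)^-1 *: g); split; last by rewrite dvdpZl.
  - split; first by rewrite size_scale.
    move=> q sq; rewrite dvdpZr // => /(gI q sq) E.
    by apply: eqp_trans E _; rewrite eqp_sym eqp_scale.
  - by case: (scale_monic g0).
have [d [sd dg nE]] : exists d : {poly F}, [/\ size d != 1%N, d %| g & ~ (d %= g)].
  apply: NNPP => H; apply: gNI; split; first done; move=> d sd dg.
  by apply: NNPP => nE; apply: H; exists d.
have d0 : d != 0 by apply: contraNneq g0 => E; move: dg; rewrite E dvd0p.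
have sdg : (size d < size g)%N.
  rewrite ltn_neqAle dvdp_leq // andbT; apply/negP => E.
  by apply: nE; rewrite -dvdp_size_eqp.
have sd1 : (1 < size d)%N.
  by rewrite ltn_neqAle eq_sym sd /= size_poly_gt0.
have sdN : (size d < N)%N by rewrite ltnS in sN; apply: leq_trans sdg sN.
have [h [hI hM hd]] := IH d sdN sd1.
by exists h; split => //; apply: dvdp_trans hd dg.
Qed.
Lemma nz_pow1 (K : fieldType) (z : K) N : z != 0 -> (0 < N)%N -> z ^+ N = z -> z ^+ (N - 1) = 1.
Proof.
move=> z0 N0 H; apply: (mulIf z0); rewrite mul1r -exprSr subn1 prednK //.
Qed.

Lemma root_pow (K : fieldType) (z : K) t r a' : (0 < t)%N -> coprime t r ->
  (t %| gcdn t r + a' * r)%N -> z ^+ t = 1 -> z ^+ (r * (t.-1 * a')) = z.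
Proof.
move=> t0 cop Ha zt.
have z0 : z != 0.
  apply/eqP => E; move: zt; rewrite E expr0n gtn_eqF //= => /eqP.
  by rewrite eq_sym oner_eq0.
have Et : z ^+ t = z ^+ t.-1 * z by rewrite -exprSr prednK.
have H1 : z ^+ (a' * r) * z = 1.
  move: Ha; rewrite (eqP cop) => Ha.
  by rewrite -exprSr -add1n -(divnK Ha) mulnC exprM zt expr1n.
have H2 : z ^+ (a' * r) = z ^+ t.-1 by apply: (mulIf z0); rewrite H1 -Et zt.
have y0 : z ^+ t.-1 != 0 by rewrite expf_neq0.
have -> : (r * (t.-1 * a') = (a' * r) * t.-1)%N by rewrite mulnCA mulnC (mulnC r).
rewrite exprM H2.
apply: (mulIf y0); rewrite -exprSr prednK // -exprM mulnC exprM zt expr1n.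
by rewrite -exprS prednK.
Qed.
Unset Implicit Arguments.
Theorem mainTheorem5 (F : finFieldType) (r n t : nat) (f psi : {poly F}) :
  prime r -> odd r -> ~~ (r %| #|F|)%N ->
  is_mult_order_mod #|F| r r.-1 ->
  (1 < n)%N -> coprime n r.-1 ->
  f \is monic -> irreducible_poly f -> size f = n.+1 ->
  is_poly_order f t ->
  psi \is monic -> (size psi <= n.+1)%N ->
  f %| psi \Po ('X^r %% f) ->
  (forall phi : {poly F}, phi \is monic -> (size phi <= n.+1)%N ->
     f %| phi \Po ('X^r %% f) -> (size psi <= size phi)%N) ->
  [/\ irreducible_poly psi, size psi = n.+1 &
      f %| psi \Po 'X^r] /\
  [/\
      irreducible_poly ((psi \Po 'X^r) %/ f),
      size ((psi \Po 'X^r) %/ f) = ((r.-1 * n).+1)%N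
    & is_poly_order ((psi \Po 'X^r) %/ f) (r * t)].
Proof.
move=> rP rodd rq [ro0 [roq romin]] n1 ncop fM fI fs [t0 [ft tmin]] psiM psis Hpsi Hmin.
set q := #|F|.
have q1 : (1 < q)%N := finNzRing_gt1 F.
have r3 : (2 < r)%N.
  rewrite ltn_neqAle prime_gt1 // andbT; apply/eqP => E; by rewrite -E in rodd.
have [Kf [iota [a RFf]]] := RF_exists fM fI.
have [Hcf Hrf Hsf] := RFf.
have sf : (size f).-1 = n by rewrite fs.
have Hcf' : #|Kf| = (q ^ n)%N by rewrite Hcf sf.
have aord : forall k, (a ^+ k = 1) <-> (f %| 'X^k - 1).
  move=> k; split => [H | /Hrf]; first by apply/Hrf; rewrite ev_Xn1 H subrr.
  by rewrite ev_Xn1 => /eqP; rewrite subr_eq0 => /eqP.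
have at1 : a ^+ t = 1 by apply/aord.
have tdvd : forall k, a ^+ k = 1 -> (t %| k)%N.
  move=> k; apply: (@ord_dvd (fun k => a ^+ k = 1) t (@expr_closed _ a) t0 at1 _ k).
  by move=> j j0 /aord; apply: tmin.
have a0 : a != 0.
  apply/eqP => E; move: at1; rewrite E expr0n gtn_eqF //= => /eqP.
  by rewrite eq_sym oner_eq0.
have aq : a ^+ (q ^ n) = a by rewrite -Hcf' expf_card.
have qn0 : (0 < q ^ n)%N by rewrite expn_gt0 ltnW.
have tq : (t %| q ^ n - 1)%N by apply: tdvd; apply: nz_pow1.
have rnq : ~~ (r %| q ^ n - 1)%N.
  apply/negP => H; have := dvd_sub1 qn0 H.
  move/(ord_dvd (P := fun k => (q ^ k = 1 %[mod r])%N) (@mod_closed q r) ro0 roq romin).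
  move/gcdn_idPr; rewrite (eqP ncop) => E.
  by move: r3; rewrite -(prednK (ltnW (prime_gt1 rP))) -E.
have crt : coprime r t.
  by rewrite prime_coprime //; apply: contra rnq => H; apply: dvdn_trans H tq.
pose b := a ^+ r.
have evR : (map_poly iota ('X^r %% f)).[a] = b.
  have : f %| 'X^r - 'X^r %% f by rewrite {1}(divp_eq 'X^r f) addrK dvdp_mull.
  move/Hrf; rewrite rmorphB hornerD hornerN ev_Xn => /eqP; rewrite subr_eq0 => /eqP E.
  by rewrite -E.
have crit : forall phi, (f %| phi \Po ('X^r %% f)) <-> (map_poly iota phi).[b] = 0.
  move=> phi; split => [/Hrf | H]; first by rewrite ev_comp evR.
  by apply/Hrf; rewrite ev_comp evR.
have crit2 : forall phi, (f %| phi \Po 'X^r) <-> (map_poly iota phi).[b] = 0.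
  move=> phi; split => [/Hrf | H]; first by rewrite ev_comp ev_Xn.
  by apply/Hrf; rewrite ev_comp ev_Xn.
have psib : (map_poly iota psi).[b] = 0 by apply/crit.
have partA3 : f %| psi \Po 'X^r by apply/crit2.
have minb : forall phi : {poly F}, phi != 0 -> (size phi <= n.+1)%N -> (map_poly iota phi).[b] = 0 ->
    (size psi <= size phi)%N.
  move=> phi p0 ps pb; have [mM mS] := scale_monic p0.
  rewrite -mS; apply: Hmin => //; first by rewrite mS.
  by apply/crit; rewrite map_polyZ hornerZ pb mulr0.
have psi0 : psi != 0 by apply: monic_neq0.
have spsi1 : (1 < size psi)%N.
  rewrite ltn_neqAle eq_sym size_poly_gt0 psi0 andbT; apply/negP => /eqP E.
  have E0 : psi`_0 = 1 by move: psiM; rewrite monicE /lead_coef E => /eqP.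
  have Ep : psi = 1 by rewrite (size1_polyC (eq_leq E)) E0.
  by move: psib; rewrite Ep rmorph1 hornerC => /eqP; rewrite oner_eq0.
have psiI : irreducible_poly psi.
  split => // g sg gd.
  have g0 : g != 0 by apply/eqP => E; move: gd; rewrite E dvd0p (negbTE psi0).
  have /dvdpP [Q EQ] := gd.
  have Q0 : Q != 0 by apply/eqP => E; move: psi0; rewrite EQ E mul0r eqxx.
  have sgle : (size g <= size psi)%N := dvdp_leq psi0 gd.
  have sg2 : (1 < size g)%N by rewrite ltn_neqAle eq_sym sg size_poly_gt0.
  move: (psib); rewrite {1}EQ rmorphM hornerM => /eqP; rewrite mulf_eq0 => /orP [/eqP Qb | /eqP gb].
  - have sQ : (size Q <= size psi)%N by apply: dvdp_leq psi0 _; rewrite EQ dvdp_mulIl.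
    have := minb Q Q0 (leq_trans sQ psis) Qb; rewrite EQ size_mul // -subn1 => H.
    rewrite -addnBA ?(ltnW sg2) // -[X in (_ <= X)%N](addn0 (size Q)) leq_add2l in H.
    by rewrite leqn0 subn_eq0 leqNgt sg2 in H.
  - have := minb g g0 (leq_trans sgle psis) gb => H.
    by rewrite -dvdp_size_eqp // eqn_leq sgle H.
have spsi : size psi = n.+1.
  set dpsi := (size psi).-1.
  have [Kp [iotap [c RFp]]] := RF_exists psiM psiI.
  have [Hcp Hrp Hsp] := RFp.
  have cq : c ^+ (q ^ dpsi) = c by rewrite -Hcp expf_card.
  have pd : psi %| 'X^(q ^ dpsi) - 'X.
    by apply/Hrp; rewrite rmorphB /= map_polyX map_polyXn !hornerE cq subrr.
  have bq : b ^+ (q ^ dpsi) = b.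
    have := ev_dvd pd psib; rewrite rmorphB /= map_polyX map_polyXn !hornerE.
    by move/eqP; rewrite subr_eq0 => /eqP.
  have aqd : a ^+ (q ^ dpsi) = a.
    set u := a ^+ (q ^ dpsi).
    have u0 : u != 0 by rewrite expf_neq0.
    have ur : u ^+ r = a ^+ r by rewrite -exprM mulnC exprM bq.
    set w := u / a.
    have w0 : w != 0 by rewrite mulf_neq0 ?invr_eq0.
    have wr : w ^+ r = 1 by rewrite expr_div_n ur divff // expf_neq0.
    have wq : w ^+ (q ^ n - 1) = 1 by apply: nz_pow1 => //; rewrite -Hcf' expf_card.
    have := gcd_closed (@expr_closed _ w) wr wq.
    have cop : coprime r (q ^ n - 1) by rewrite prime_coprime.
    rewrite (eqP cop) expr1 => w1.
    by rewrite -[u](divfK a0) -/w w1 mul1r.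
  have dp0 : (0 < dpsi)%N by rewrite /dpsi -ltnS prednK // ltnW.
  have := fix_dvd RFf dp0 aqd; rewrite sf => nd.
  have := dvdn_leq dp0 nd; rewrite /dpsi => H.
  by apply/eqP; rewrite eqn_leq psis /= -(prednK (ltnW spsi1)) ltnS.
pose P := psi \Po 'X^r.
pose G := P %/ f.
have EP : P = G * f by rewrite /G divpK.
have rK : (r%:R : Kf) != 0 by rewrite -(rmorph_nat iota) fmorph_eq0 r_nz.
have qnF : ((q ^ n)%:R : F) = 0 by rewrite natrX q_zero expr0n gtn_eqF // ltnW.
have psi_sep : psi^`() != 0.
  apply/eqP => D.
  have bqn : b ^+ (q ^ n) = b by rewrite -Hcf' expf_card.
  have pd : psi %| 'X^(q ^ n) - 'X.
    apply: (minpoly_dvd psiI psib).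
    by rewrite rmorphB /= map_polyX map_polyXn !hornerE bqn subrr.
  have /dvdpP [R ER] := pd.
  have := congr1 deriv ER.
  rewrite derivM D mulr0 addr0 derivB derivXn derivX -mulr_natr -polyC_natr qnF mulr0 sub0r => E.
  have : psi %| - 1 by rewrite E dvdp_mull.
  move/(dvdp_leq _); rewrite oppr_eq0 oner_eq0 => /(_ isT).
  by rewrite size_polyN size_poly1 leqNgt spsi1.
have sep : ~~ (f %| G).
  apply/negP => /dvdpP [G2 EG].
  have fdP' : f %| P^`().
    rewrite EP EG derivM.
    apply: dvdp_add; [apply: dvdp_mull; apply: dvdpp | apply: dvdp_mulr; apply: dvdp_mull; apply: dvdpp].
  move/Hrf: fdP'; rewrite /P deriv_comp derivXn -mulr_natr rmorphM /= hornerM.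
  rewrite ev_comp ev_Xn rmorphM /= hornerM map_polyXn hornerXn rmorph_nat hornerE.
  rewrite -polyC_natr hornerC.
  move/eqP; rewrite mulf_eq0 mulf_eq0 expf_eq0 (negbTE a0) (negbTE rK) andbF !orbF.
  move/eqP => Db.
  have : psi %| psi^`() by apply: (minpoly_dvd psiI psib Db).
  move/(dvdp_leq psi_sep); rewrite leqNgt lt_size_deriv //.
have ctr : coprime t r by rewrite coprime_sym.
have [a' _ Ha'] := Bezoutl r t0.
set s := (t.-1 * a')%N.
have bs : b ^+ s = a by rewrite -exprM (root_pow t0 ctr Ha' at1).
have bt : b ^+ t = 1 by rewrite -exprM mulnC exprM at1 expr1n.
have key : forall h : {poly F}, h \is monic -> irreducible_poly h -> h %| G ->
   exists (Kh : finFieldType) (io : {rmorphism F -> Kh}) (c : Kh),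
     [/\ RF io c h, (r.-1 * n <= (size h).-1)%N, c ^+ (r * t) = 1 &
        forall k, c ^+ k = 1 -> (r * t %| k)%N].
  move=> h hM hI hG.
  have [Kh [io [c RFh]]] := RF_exists hM hI.
  have [Hch Hrh Hsh] := RFh.
  exists Kh, io, c.
  have Gc : (map_poly io G).[c] = 0 by apply/Hrh.
  have Pc : (map_poly io psi).[c ^+ r] = 0.
    by rewrite -(ev_Xn io) -ev_comp -/P EP rmorphM /= hornerM Gc mul0r.
  have fc : (map_poly io f).[c] != 0.
    apply/eqP => /Hrh hf.
    have E : h %= f by apply: fI => //; rewrite gtn_eqF // hI.1.
    by move: sep; rewrite -(eqp_dvdl G E) hG.
  have bk : forall k, (c ^+ r) ^+ k = 1 -> b ^+ k = 1.
    move=> k Hk.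
    have : psi %| 'X^k - 1 by apply: (minpoly_dvd psiI Pc); rewrite ev_Xn1 Hk subrr.
    move/ev_dvd => /(_ _ iota b psib); rewrite ev_Xn1 => /eqP; rewrite subr_eq0 => /eqP.
    done.
  have kb : forall k, b ^+ k = 1 -> (c ^+ r) ^+ k = 1.
    move=> k Hk.
    have : psi %| 'X^k - 1 by apply: (minpoly_dvd psiI psib); rewrite ev_Xn1 Hk subrr.
    move/ev_dvd => /(_ _ io (c ^+ r) Pc); rewrite ev_Xn1 => /eqP; rewrite subr_eq0 => /eqP.
    done.
  have crt1 : c ^+ (r * t) = 1 by rewrite exprM kb.
  have c0 : c != 0.
    apply/eqP => E; move: crt1; rewrite E expr0n gtn_eqF ?muln_gt0 ?t0 ?andbT ?prime_gt0 //=.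
    by move/eqP; rewrite eq_sym oner_eq0.
  have cdiv : forall k, c ^+ k = 1 -> (r * t %| k)%N.
    move=> k ck.
    have tk : (t %| k)%N.
      have : b ^+ k = 1 by apply: bk; rewrite -exprM mulnC exprM ck expr1n.
      rewrite /b -exprM => /tdvd.
      by rewrite Gauss_dvdr.
    rewrite Gauss_dvd // tk andbT.
    apply: contraT => nrk.
    have ct : c ^+ t = 1.
      have := gcd_closed (@expr_closed _ c) crt1 ck.
      rewrite -(divnK tk) mulnC [X in gcdn _ X]mulnC -muln_gcdr.
      have cop : coprime r (k %/ t).
        rewrite prime_coprime //; apply: contra nrk => H.
        by rewrite -(divnK tk) dvdn_mulr.
      by rewrite (eqP cop) muln1.
    have cs : (c ^+ r) ^+ s = c by rewrite -exprM (root_pow t0 ctr Ha' ct).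
    have : psi %| f \Po 'X^s.
      apply: (minpoly_dvd psiI psib); rewrite ev_comp ev_Xn bs.
      by apply/Hrf.
    move/ev_dvd => /(_ _ io (c ^+ r) Pc); rewrite ev_comp ev_Xn cs => /eqP.
    by rewrite (negbTE fc).
  split => //.
  set m := (size h).-1.
  have cq : c ^+ (q ^ m) = c by rewrite -Hch expf_card.
  have m0 : (0 < m)%N by rewrite /m -ltnS prednK ?hI.1 // ltnW // hI.1.
  have qm0 : (0 < q ^ m)%N by rewrite expn_gt0 ltnW.
  have rtd : (r * t %| q ^ m - 1)%N by apply: cdiv; apply: nz_pow1.
  have rm : (r.-1 %| m)%N.
    apply: (@ord_dvd (fun k => (q ^ k = 1 %[mod r])%N) _ (@mod_closed q r) ro0 roq romin).
    apply: dvd_sub1 => //; apply: dvdn_trans rtd; apply: dvdn_mulr; apply: dvdnn.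
  have nm : (n %| m)%N.
    have tm : (t %| q ^ m - 1)%N by apply: dvdn_trans rtd; apply: dvdn_mull; apply: dvdnn.
    have am1 : a ^+ (q ^ m - 1) = 1 by rewrite -(divnK tm) mulnC exprM at1 expr1n.
    have am : a ^+ (q ^ m) = a by rewrite -(subnK qm0) exprD am1 mul1r expr1.
    by have := fix_dvd RFf m0 am; rewrite sf.
  have : (n * r.-1 %| m)%N by rewrite Gauss_dvd // nm rm.
  by move/(dvdn_leq m0); rewrite mulnC.
have PM : P \is monic.
  have L1 : lead_coef ('X^r : {poly F}) = 1 by apply: lead_coefXn.
  rewrite monicE lead_coef_comp; last by rewrite size_polyXn ltnS prime_gt0.
  by rewrite L1 expr1n mulr1 -monicE.
have P0 : P != 0 by apply: monic_neq0.
have sP : size P = (n * r).+1.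
  have := size_comp_poly psi 'X^r; rewrite -/P spsi size_polyXn /= => H.
  by rewrite -H prednK // size_poly_gt0.
have f0 : f != 0 by apply: monic_neq0.
have sG : size G = (r.-1 * n).+1.
  rewrite /G size_divp // sP sf -subn1 mulnBl mul1n mulnC subSn //.
  by rewrite leq_pmull // prime_gt0.
have GM : G \is monic.
  by move: PM; rewrite !monicE EP lead_coefM (eqP fM) mulr1.
have G0 : G != 0 by apply: monic_neq0.
have GI : irreducible_poly G.
  split.
    by rewrite sG ltnS muln_gt0 (ltnW n1) andbT -ltnS prednK ?prime_gt0 // ltnW.
  move=> g sg gG.
  have g0 : g != 0 by apply/eqP => E; move: gG; rewrite E dvd0p (negbTE G0).
  have sg2 : (1 < size g)%N by rewrite ltn_neqAle eq_sym sg size_poly_gt0.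
  have [h [hI hM hg]] := irr_factor sg2.
  have [Kh [io [c [RFh deg _ _]]]] := key h hM hI (dvdp_trans hg gG).
  have h1 := dvdp_leq g0 hg.
  have h2 := dvdp_leq G0 gG.
  rewrite -dvdp_size_eqp // eqn_leq h2 /= sG (leq_trans _ h1) //.
  by rewrite -(prednK (ltnW hI.1)) ltnS.
split; first by [].
split => //.
have [Kh [io [c [RFh _ crt1 cdiv]]]] := key G GM GI (dvdpp G).
have [_ Hrh _] := RFh.
split; first by rewrite muln_gt0 prime_gt0.
rewrite -/P -/G; split.
  by apply/Hrh; rewrite ev_Xn1 crt1 subrr.
move=> k k0 /Hrh; rewrite ev_Xn1 => /eqP; rewrite subr_eq0 => /eqP /cdiv.
exact: dvdn_leq.
Qed.
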